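(* Let $1<p<\infty$ and $\theta>0$. There exists a weight function $a$ on $\mathbb R$ such that the generalized grand Lebesgue space $L_a^{p),\theta}(\mathbb R)$ is not reflexive.
   Context: A weight function on $\mathbb R^n$ is a positive, measurable, locally integrable function (vanishing at most on a set of measure zero). For $1<p<\infty$, $\theta\ge 0$ and a weight $a$, the generalized grand Lebesgue space $L_a^{p),\theta}(\mathbb R^n)$ is the space of measurable $f$ with $\|f\|_{L_a^{p),\theta}}=\sup_{0<\varepsilon\le p-1}\varepsilon^{\theta}\Big(\int_{\mathbb R^n}|f(x)|^{p-\varepsilon}a(x)^{\varepsilon/p}\,dx\Big)^{1/(p-\varepsilon)}<\infty$. *)

(* Defs.v *)
From HB Require Import structures.
From mathcomp Require Import all_boot all_order all_algebra.
From mathcomp Require Import all_classical all_reals all_analysis.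
Set Implicit Arguments. Unset Strict Implicit. Unset Printing Implicit Defensive.
Import Order.TTheory GRing.Theory Num.Theory.
Local Open Scope classical_set_scope.
Local Open Scope ring_scope.

Section GGL.
Context {R : realType}.
Local Notation mu := (@lebesgue_measure R).

Definition weight (a : R -> R) : Prop :=
  [/\ (forall x, 0 <= a x),
      locally_integrable setT a &
      mu [set x | a x = 0] = 0%E].

Definition ggl_norm (p theta : R) (a : R -> R) (f : R -> R) : \bar R :=
  ereal_sup [set ((eps `^ theta)%:E *
     ((\int[mu]_x ((`|f x| `^ (p - eps)) * (a x `^ (eps / p)))%:E)
        `^ (1 / (p - eps)))%E)%E
   | eps in `]0, p - 1]].

Definition ggl_space (p theta : R) (a : R -> R) : set (R -> R) :=
  [set f | measurable_fun setT f /\ (ggl_norm p theta a f < +oo)%E].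

Definition bounded_linear_functionals (X : set (R -> R)) (N : (R -> R) -> \bar R)
  : set ((R -> R) -> R) :=
  [set phi | (forall f g, X f -> X g -> phi (f \+ g) = phi f + phi g) /\
             (forall (c : R) f, X f -> phi (c \*: f) = c * phi f) /\
             exists M : R, forall f, X f -> (`|phi f|%:E <= M%:E * N f)%E].

(* phi admits bound M: |phi f| <= M ||f|| on X; the dual norm of phi is the
   infimum of such M >= 0. *)
Definition dual_bound (X : set (R -> R)) (N : (R -> R) -> \bar R)
  (phi : (R -> R) -> R) (M : R) : Prop :=
  0 <= M /\ forall f, X f -> (`|phi f|%:E <= M%:E * N f)%E.

(* Reflexivity: every bounded linear functional Psi on the dual X^* is of the
   form phi |-> phi f for some f in X (canonical embedding onto the bidual). *)
Definition reflexive_space (X : set (R -> R)) (N : (R -> R) -> \bar R) : Prop :=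
  let Xs := bounded_linear_functionals X N in
  forall Psi : ((R -> R) -> R) -> R,
    (forall phi psi, Xs phi -> Xs psi -> Psi (phi \+ psi) = Psi phi + Psi psi) ->
    (forall (c : R) phi, Xs phi -> Psi (c \*: phi) = c * Psi phi) ->
    (exists C : R, forall phi M, Xs phi -> dual_bound X N phi M -> `|Psi phi| <= C * M) ->
    exists2 f, X f & forall phi, Xs phi -> Psi phi = phi f.

End GGL.

(* Main.v *)
Require Import Defs.
From HB Require Import structures.
From mathcomp Require Import all_boot all_order all_algebra.
From mathcomp Require Import all_classical all_reals all_analysis.
Import Order.TTheory GRing.Theory Num.Theory.
Local Open Scope ring_scope.

Module Aux.
From mathcomp Require Import measurable_realfun.
Import numFieldNormedType.Exports.
Local Open Scope classical_set_scope.
Local Open Scope ring_scope.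
Set Implicit Arguments. Unset Strict Implicit.

Section ULim.
Context {R : realType} (G : set_system nat) {GU : UltraFilter G}.

Lemma ulim_cvg (u : nat -> R) (B : R) : (forall n, `|u n| <= B) ->
  u @ G --> lim (u @ G).
Proof.
move=> uB.
have cA : compact `[-B, B] := @segment_compact _ _ _.
have GA : G (u @^-1` `[-B, B]%classic).
  by apply: filterE => n /=; rewrite in_itv /= -ler_norml.
have [p [_ cp]] := cA (u @ G) _ GA.
suff up : u @ G --> p by rewrite (cvg_lim _ up).
move=> V /= pV.
have [//|GnV] := in_ultra_setVsetC (u @^-1` V) GU.
have := cp (~` V) V GnV pV.
by case=> x [].
Qed.
Definition ulim (u : nat -> R) : R := lim (u @ G).

Lemma ulimD (u v : nat -> R) (B C : R) : (forall n, `|u n| <= B) ->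
  (forall n, `|v n| <= C) -> ulim (fun n => u n + v n) = ulim u + ulim v.
Proof.
move=> uB vC; apply: cvg_lim; first exact: Rhausdorff.
have := cvgD (ulim_cvg uB) (ulim_cvg vC); exact.
Qed.

Lemma ulimZ (u : nat -> R) (B c : R) : (forall n, `|u n| <= B) ->
  ulim (fun n => c * u n) = c * ulim u.
Proof.
move=> uB; apply: cvg_lim; first exact: Rhausdorff.
have := @cvgMr _ _ _ _ u c _ (ulim_cvg uB); exact.
Qed.

Lemma ulim_le (u : nat -> R) (B : R) : (forall n, `|u n| <= B) ->
  `|ulim u| <= B.
Proof.
move=> uB.
have := @closed_cvg _ _ G _ u [set x : R | `|x| <= B] _ _ _ (ulim_cvg uB).
apply.
  rewrite (_ : [set x : R | _] = (fun x => `|x|) @^-1` [set x | x <= B]) //.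
  apply: closed_comp => //.
  move=> x _; exact: norm_continuous.
by apply: nearW => n; exact: uB.
Qed.

Lemma ulim_near (u : nat -> R) (c : R) : (\oo `<=` G) ->
  (\forall n \near \oo, u n = c) -> ulim u = c.
Proof.
move=> sG ev; apply: cvg_lim; first exact: Rhausdorff; apply: cvg_near_cst.
exact: sG.
Qed.
End ULim.

Section M.
Context {R : realType}.
Local Notation mu := (@lebesgue_measure R).

Lemma weight1 : weight (fun _ : R => 1).
Proof.
split => //.
- split => //; first exact: openT.
  move=> K _ cK.
  have mK : measurable K by exact: measurable_realfun.compact_measurable.
  rewrite (_ : (fun x => _) = cst 1%E); last by apply/funext => x; rewrite normr1.
  rewrite integral_cst // mul1e; exact: compact_finite_measure.
- rewrite (_ : [set x | _] = set0) ?measure0 //.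
  by apply/seteqP; split => x //=; move/eqP; rewrite oner_eq0.
Qed.

Variables (p theta : R) (hp : 1 < p) (htheta : 0 < theta).
Definition a1 := fun _ : R => (1:R).
Local Notation N := (ggl_norm p theta a1).
Local Notation X := (ggl_space p theta a1).
Definition c0 := (p - 1) `^ theta.

Lemma c0_gt0 : 0 < c0.
Proof. by rewrite /c0 powR_gt0 // subr_gt0. Qed.

Lemma norm_ge_L1 f : (c0%:E * \int[mu]_x (`|f x|)%:E <= N f)%E.
Proof.
apply: ereal_sup_ubound; exists (p - 1).
  by rewrite /= in_itv /= lexx subr_gt0 hp.
rewrite /c0 (_ : p - (p - 1) = 1); last by rewrite opprB addrC subrK.
rewrite divr1 poweRe1; last first.   by apply: integral_ge0 => x _; rewrite lee_fin mulr_ge0 // powR_ge0.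
apply: f_equal; apply: eq_integral => x _.
by rewrite /a1 powR1 mulr1 powRr1.
Qed.

Lemma L1_le f : (\int[mu]_x (`|f x|)%:E <= (c0^-1)%:E * N f)%E.
Proof. by rewrite lee_pdivlMl ?c0_gt0 //; exact: norm_ge_L1. Qed.

Lemma X_int f : X f -> mu.-integrable setT (EFin \o f).
Proof.
case=> mf Nf; apply/integrableP; split; first exact/measurable_EFinP.
apply: le_lt_trans (L1_le f) _.
by apply: lte_mul_pinfty => //; rewrite lee_fin invr_ge0 ltW // c0_gt0.
Qed.

Definition phiD (D : set (measurableTypeR R)) (f : R -> R) : R := fine (\int[mu]_(x in D) (f x)%:E).

Lemma phiD_Xs (D : set (measurableTypeR R)) : measurable D -> bounded_linear_functionals X N (phiD D).
Proof.
move=> mD.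
have iD f : X f -> mu.-integrable D (EFin \o f).
  by move=> Xf; apply: integrableS (X_int Xf).
split; [|split].
- move=> f g Xf Xg; rewrite /phiD.
  under eq_integral do rewrite /= EFinD.
  rewrite integralD //; [|exact: iD|exact: iD].
  by rewrite fineD // (integrable_fin_num mD (iD _ _)).
- move=> c f Xf; rewrite /phiD.
  under eq_integral do rewrite /= EFinM.
  rewrite integralZl //; last exact: iD.
  by rewrite fineM // (integrable_fin_num mD (iD _ _)).
- exists (c0^-1) => f Xf; rewrite /phiD.
  have fin := integrable_fin_num mD (iD _ Xf).
  rewrite -abse_EFin fineK //.
  apply: le_trans (le_abse_integral _ _ _) _ => //.
    by apply/measurable_EFinP; apply: measurable_funS (proj1 Xf).
  apply: le_trans (L1_le f).
  apply: ge0_subset_integral => //.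
  - by apply/measurable_EFinP; apply: measurableT_comp => //; exact: (proj1 Xf).
Qed.

Definition In (n : nat) : set (measurableTypeR R) := `[n%:R, n%:R + 1]%classic.
Definition fn (n : nat) : R -> R := \1_(In n).

Lemma mIn n : measurable (In n).
Proof. exact: measurable_itv. Qed.

Lemma muIn n : mu (In n) = 1%E.
Proof.
rewrite /In lebesgue_measure_itv /= lte_fin ltrDl ltr01.
by rewrite -EFinB addrAC subrr add0r.
Qed.

Lemma fn_term n eps : 0 < eps < p ->
  (((eps `^ theta)%:E * ((\int[mu]_x ((`|fn n x| `^ (p - eps)) * (a1 x `^ (eps / p)))%:E)
        `^ (1 / (p - eps)))%E) = (eps `^ theta)%:E)%E.
Proof.
case/andP => e0 ep.
rewrite (eq_integral (fun x => (\1_(In n) x)%:E)); last first.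
  move=> x _; rewrite /a1 powR1 mulr1 /fn indicE.
  case: (x \in In n); first by rewrite normr1 powR1.
  by rewrite normr0 powR0 // subr_eq0 gt_eqF.
rewrite integral_indic //; last exact: mIn.
rewrite setIT (_ : _ (In n) = 1%E); last exact: muIn n.
by rewrite poweR1r mule1.
Qed.

Lemma fn_norm n : N (fn n) = c0%:E.
Proof.
apply/eqP; rewrite eq_le; apply/andP; split.
  apply: ge_ereal_sup => y [eps epsI <-]; move: epsI; rewrite /= in_itv /= => /andP[e0 ep].
  rewrite fn_term; last by rewrite e0 /= (le_lt_trans ep) // gtrBl ltr01.
  rewrite lee_fin /c0; apply: ge0_ler_powR => //; first exact: ltW.
    by rewrite nnegrE ltW.
  by rewrite nnegrE subr_ge0 ltW.
apply: ereal_sup_ubound; exists (p - 1).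
  by rewrite /= in_itv /= lexx subr_gt0 hp.
by rewrite fn_term // subr_gt0 hp /= gtrBl ltr01.
Qed.

Lemma fn_X n : X (fn n).
Proof.
split; first by apply: measurable_indic; exact: mIn.
by rewrite fn_norm ltry.
Qed.

Definition Fk (k : nat) : set (measurableTypeR R) :=
  if k is k'.+1 then `[k'%:R, k'%:R + 1[%classic else `]-oo, 0[%classic.

Lemma mFk k : measurable (Fk k).
Proof. by case: k => [|k]; exact: measurable_itv. Qed.

Lemma Fk_cover : \bigcup_k Fk k = setT.
Proof.
apply/seteqP; split => // x _.
have [x0|x0] := ltP x 0.
  by exists 0%N => //=; rewrite in_itv /= x0.
exists (Num.truncn x).+1 => //=; rewrite in_itv /=.
by have := Num.Theory.truncn_itv x0; rewrite -natr1.
Qed.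

Lemma Fk_triv : trivIset setT Fk.
Proof.
move=> i j _ _ [x []].
case: i => [|i]; case: j => [|j] //=; rewrite !in_itv /=.
- move=> x0 /andP[jx _]; exfalso.
  by move: (le_lt_trans jx x0); rewrite ltNge ler0n.
- move=> /andP[ix _] x0; exfalso.
  by move: (le_lt_trans ix x0); rewrite ltNge ler0n.
- move=> /andP[ix xi] /andP[jx xj].
  have x0 : 0 <= x by apply: le_trans ix.
  have -> : i = Num.truncn x by apply/esym/Num.Theory.truncn_def; rewrite ix /= -natr1.
  have -> : j = Num.truncn x by apply/esym/Num.Theory.truncn_def; rewrite jx /= -natr1.
  by [].
Qed.

Lemma phiD_T_fn n : phiD setT (fn n) = 1.
Proof.
rewrite /phiD /fn integral_indic //; last exact: mIn.
by rewrite setIT (_ : _ (In n) = 1%E) //; exact: muIn.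
Qed.

Lemma phiD_Fk_fn k n : (k <= n)%N -> phiD (Fk k) (fn n) = 0.
Proof.
move=> kn.
rewrite /phiD /fn integral_indic //; [|exact: mFk|exact: mIn].
rewrite (_ : In n `&` Fk k = set0) ?measure0 //.
apply/seteqP; split => // x [].
rewrite /In /Fk /= !in_itv /= => /andP[nx _].
case: k kn => [|k] kn /=.
  by move=> x0; move: (le_lt_trans nx x0); rewrite ltNge ler0n.
move=> /andP[_ xk]; move: (le_lt_trans nx xk).
by rewrite natr1 ltr_nat ltnS leqNgt kn.
Qed.
End M.

End Aux.
Import Aux.
Import numFieldNormedType.Exports.
Local Open Scope classical_set_scope.

Theorem corollary2 (R : realType) (p theta : R) (hp : 1 < p) (htheta : 0 < theta) :
  exists a : R -> R, weight a /\
    ~ reflexive_space (ggl_space p theta a) (ggl_norm p theta a).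
Proof.
exists (@a1 R); split; first exact: weight1.
move=> Hrefl.
have [G [GU sG]] := @ultraFilterLemma nat (\oo : set_system nat) _.
have Bnd : forall phi, bounded_linear_functionals (ggl_space p theta (@a1 R))
    (ggl_norm p theta (@a1 R)) phi -> exists B : R, forall n, `|phi (fn n)| <= B.
  move=> phi [_ [_ [M hM]]]; exists (`|M| * c0 p theta) => n.
  have := hM _ (fn_X hp htheta n); rewrite (fn_norm hp htheta) -EFinM lee_fin => h.
  apply: le_trans h _; rewrite ler_wpM2r ?ler_norm //.
  exact/ltW/c0_gt0.
set Psi := (fun Phi : (R -> R) -> R => ulim G (fun n => Phi (fn n))).
have Hadd : forall phi psi,
    bounded_linear_functionals (ggl_space p theta (@a1 R)) (ggl_norm p theta (@a1 R)) phi ->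
    bounded_linear_functionals (ggl_space p theta (@a1 R)) (ggl_norm p theta (@a1 R)) psi ->
    Psi (phi \+ psi) = Psi phi + Psi psi.
  move=> phi psi Xphi Xpsi.
  have [B1 hB1] := Bnd _ Xphi; have [B2 hB2] := Bnd _ Xpsi.
  have := ulimD (u := fun n => phi (fn n)) (v := fun n => psi (fn n)) hB1 hB2.
  exact.
have Hsc : forall (c : R) phi,
    bounded_linear_functionals (ggl_space p theta (@a1 R)) (ggl_norm p theta (@a1 R)) phi ->
    Psi (c \*: phi) = c * Psi phi.
  move=> c phi Xphi.
  have [B1 hB1] := Bnd _ Xphi.
  have := ulimZ (u := fun n => phi (fn n)) c hB1.
  exact.
have Hbd : exists C : R, forall phi M,
    bounded_linear_functionals (ggl_space p theta (@a1 R)) (ggl_norm p theta (@a1 R)) phi ->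
    dual_bound (ggl_space p theta (@a1 R)) (ggl_norm p theta (@a1 R)) phi M -> `|Psi phi| <= C * M.
  exists (c0 p theta) => phi M Xphi [M0 hM].
  apply: ulim_le => n.
  have := hM _ (fn_X hp htheta n); rewrite (fn_norm hp htheta) -EFinM lee_fin mulrC; exact.
have [h Xh hPsi] := Hrefl Psi Hadd Hsc Hbd.
have e1 := hPsi _ (phiD_Xs theta hp measurableT); rewrite /Psi in e1.
rewrite (@ulim_near _ _ GU _ 1 sG) in e1; last first.
  by apply: nearW => n; exact: phiD_T_fn.
have e0 k : (\int[lebesgue_measure]_(x in Fk k) (h x)%:E = 0)%E.
  have := hPsi _ (phiD_Xs theta hp (mFk k)); rewrite /Psi.
  rewrite (@ulim_near _ _ GU _ 0 sG); last first.
    by exists k => // n /= kn; exact: phiD_Fk_fn.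
  move=> /esym e; rewrite -[LHS]fineK; first by rewrite -/(phiD (Fk k) h) e.
  apply: (integrable_fin_num (mFk k)).
  exact: (integrableS measurableT (mFk k) (fun _ _ => I) (X_int hp Xh)).
have : (\int[lebesgue_measure]_(x in \bigcup_k Fk k) (h x)%:E = 0)%E.
  rewrite integral_bigcup //; first exact: eseries0.
  - exact: Fk_triv.
  - exact: mFk.
  - by rewrite Fk_cover; exact: (X_int hp Xh).
rewrite Fk_cover => e.
by move: e1; rewrite /phiD e /= => /eqP; rewrite oner_eq0.
Qed.
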